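(* Let $G$ and $H$ be finite simple graphs such that $|V(G)| \geq \gamma(G)\gamma(H)$ and $|V(H)| \geq \gamma(G)\gamma(H)$. Then $\gamma(G \square H) \geq \gamma(G)\gamma(H)$.
   Context: All graphs are finite, simple and undirected. For a graph $G=(V,E)$, a subset $S\subseteq V$ dominates $G$ if every vertex of $G$ lies in $S$ or is adjacent to a vertex of $S$ (i.e. the closed neighborhood $N[S]$ equals $V$); the domination number $\gamma(G)$ is the minimum cardinality of a dominating set of $G$. The Cartesian product $G \square H$ has vertex set $V(G)\times V(H)$, with $(u_1,v_1)$ adjacent to $(u_2,v_2)$ if and only if either $v_1=v_2$ and $u_1u_2\in E(G)$, or $u_1=u_2$ and $v_1v_2\in E(H)$. *)

(* Defs.v *)
From mathcomp Require Import all_boot.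
Set Implicit Arguments. Unset Strict Implicit. Unset Printing Implicit Defensive.

Definition simple_graph (T : finType) (e : rel T) : Prop :=
  symmetric e /\ irreflexive e.

Definition dominating (T : finType) (e : rel T) (S : {set T}) : bool :=
  [forall v, (v \in S) || [exists u in S, e v u]].

(* Domination number: minimum cardinality of a dominating set
   (setT always dominates, so the minimum is attained; the neutral
   element #|T| = #|setT| is therefore harmless). *)
Definition domination_number (T : finType) (e : rel T) : nat :=
  \big[minn/#|T|]_(S : {set T} | dominating e S) #|S|.

Definition cart_prod (T U : finType) (eG : rel T) (eH : rel U) : rel (T * U) :=
  fun x y => ((x.2 == y.2) && eG x.1 y.1) || ((x.1 == y.1) && eH x.2 y.2).

(* Main.v *)
Require Import Defs.
From mathcomp Require Import all_boot.

Lemma key (T U : finType) (eG : rel T) (eH : rel U) (S : {set T * U}) :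
  dominating (cart_prod eG eH) S -> minn #|T| #|U| <= #|S|.
Proof.
move=> /forallP dom.
rewrite leqNgt; apply/negP; rewrite leq_min => /andP [hT hU].
have nT : ~~ ([set: T] \subset (fun x : T * U => x.1) @: S).
  apply/negP => /subset_leq_card; rewrite cardsT => h.
  by move: (leq_trans h (leq_imset_card _ _)); rewrite leqNgt hT.
have nU : ~~ ([set: U] \subset (fun x : T * U => x.2) @: S).
  apply/negP => /subset_leq_card; rewrite cardsT => h.
  by move: (leq_trans h (leq_imset_card _ _)); rewrite leqNgt hU.
case/subsetPn: nT => g _ hg.
case/subsetPn: nU => h _ hh.
move: (dom (g, h)) => /orP [Hin | /existsP [u /andP [uS]]].
  by move: hg; rewrite (imset_f (fun x : T * U => x.1) Hin).
rewrite /cart_prod /= => /orP [/andP [/eqP E _] | /andP [/eqP E _]].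
  by move: hh; rewrite E (imset_f (fun x : T * U => x.2) uS).
by move: hg; rewrite E (imset_f (fun x : T * U => x.1) uS).
Qed.

Theorem mainTheorem1 (T U : finType) (eG : rel T) (eH : rel U) :
  simple_graph eG -> simple_graph eH ->
  domination_number eG * domination_number eH <= #|T| ->
  domination_number eG * domination_number eH <= #|U| ->
  domination_number eG * domination_number eH <= domination_number (cart_prod eG eH).
Proof.
move=> _ _ hT hU.
set k := _ * _ in hT hU *.
rewrite /domination_number.
apply: (big_ind (fun x => k <= x)).
- rewrite card_prod.
  case: (posnP #|U|) => [U0 | U0].
    by move: hU; rewrite U0 leqn0 => /eqP ->.
  by apply: (leq_trans hT); rewrite leq_pmulr.
- by move=> x y hx hy; rewrite leq_min hx hy.
- move=> S /key hS; apply: leq_trans hS.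
  by rewrite leq_min hT hU.
Qed.
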